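(* Let $(X,d)$ be a complete metric space, let $k\in[0,1)$, let $S:X\to X$ be a mapping, and let $T:X\to X$ be continuous, one-to-one and subsequentially convergent. Let $\phi:[0,+\infty)\to[0,+\infty)$ be a nonnegative Lebesgue-integrable function, summable on each compact subset of $[0,+\infty)$, such that $\int_0^{\epsilon}\phi(t)\,dt>0$ for each $\epsilon>0$. Suppose that for all $x,y\in X$, \[\int_0^{d(TSx,TSy)}\phi(t)\,dt\le k\int_0^{m'(Tx,Ty)}\phi(t)\,dt,\] where \[m'(Tx,Ty)=\max\Big\{d(Tx,Ty),\,d(Tx,TSx),\,d(Ty,TSy),\,\tfrac{d(Tx,TSy)+d(Ty,TSx)}{2}\Big\}.\] Then $S$ has a unique fixed point $b\in X$. Moreover, if $T$ is sequentially convergent, then for each $x\in X$, $\lim_{n\to\infty}S^nx=b$.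
   Context: A mapping $T:X\to X$ on a metric space $(X,d)$ is called sequentially convergent if for every sequence $\{y_n\}$ in $X$, convergence of $\{Ty_n\}$ implies convergence of $\{y_n\}$. It is called subsequentially convergent if for every sequence $\{y_n\}$ in $X$, convergence of $\{Ty_n\}$ implies that $\{y_n\}$ has a convergent subsequence. *)

(* Defs.v *)
From Stdlib Require Import Reals Lra ClassicalEpsilon.
Open Scope R_scope.

Definition is_metric {X : Type} (d : X -> X -> R) : Prop :=
  (forall x y, 0 <= d x y) /\
  (forall x y, d x y = 0 <-> x = y) /\
  (forall x y, d x y = d y x) /\
  (forall x y z, d x z <= d x y + d y z).

Definition converges_to {X : Type} (d : X -> X -> R) (u : nat -> X) (l : X) : Prop :=
  forall eps, eps > 0 -> exists N : nat, forall n, (n >= N)%nat -> d (u n) l < eps.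

Definition convergent {X : Type} (d : X -> X -> R) (u : nat -> X) : Prop :=
  exists l, converges_to d u l.

Definition cauchy {X : Type} (d : X -> X -> R) (u : nat -> X) : Prop :=
  forall eps, eps > 0 -> exists N : nat,
    forall m n, (m >= N)%nat -> (n >= N)%nat -> d (u m) (u n) < eps.

Definition complete {X : Type} (d : X -> X -> R) : Prop :=
  forall u : nat -> X, cauchy d u -> convergent d u.

Definition continuous_map {X : Type} (d : X -> X -> R) (T : X -> X) : Prop :=
  forall x eps, eps > 0 -> exists delta, delta > 0 /\
    forall y, d x y < delta -> d (T x) (T y) < eps.

Definition one_to_one {X : Type} (T : X -> X) : Prop :=
  forall x y, T x = T y -> x = y.

Definition sequentially_convergent {X : Type} (d : X -> X -> R) (T : X -> X) : Prop :=
  forall y : nat -> X, convergent d (fun n => T (y n)) -> convergent d y.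

Definition subsequentially_convergent {X : Type} (d : X -> X -> R) (T : X -> X) : Prop :=
  forall y : nat -> X, convergent d (fun n => T (y n)) ->
    exists sigma : nat -> nat, (forall n, (sigma n < sigma (S n))%nat) /\
      convergent d (fun n => y (sigma n)).

(* ---------- Lebesgue integral on a compact interval ----------
   Realised as the McShane (gauge) integral, which on a compact interval
   coincides exactly with the Lebesgue integral (same integrable functions,
   same values). *)

Definition mcshane_fine (delta : R -> R) (a b : R) (n : nat) (x t : nat -> R) : Prop :=
  x 0%nat = a /\ x n = b /\
  (forall i, (i < n)%nat ->
     x i <= x (S i) /\ a <= t i <= b /\
     t i - delta (t i) < x i /\ x (S i) < t i + delta (t i)).

Fixpoint riemann_sum (f : R -> R) (x t : nat -> R) (n : nat) : R :=
  match n with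
  | O => 0
  | S m => riemann_sum f x t m + f (t m) * (x (S m) - x m)
  end.

Definition has_integral (f : R -> R) (a b I : R) : Prop :=
  forall eps, eps > 0 -> exists delta : R -> R, (forall s, delta s > 0) /\
    forall n x t, mcshane_fine delta a b n x t -> Rabs (riemann_sum f x t n - I) < eps.

Definition integrable_on (f : R -> R) (a b : R) : Prop := exists I, has_integral f a b I.

(* The value of the integral over [a,b] (meaningful when integrable). *)
Definition integral (f : R -> R) (a b : R) : R :=
  epsilon (inhabits 0) (fun I => has_integral f a b I).

Definition mprime {X : Type} (d : X -> X -> R) (S T : X -> X) (x y : X) : R :=
  Rmax (Rmax (d (T x) (T y)) (d (T x) (T (S x))))
       (Rmax (d (T y) (T (S y))) ((d (T x) (T (S y)) + d (T y) (T (S x))) / 2)).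

(* Main.v *)
Require Import Defs.
From Stdlib Require Import Reals Lra Lia ClassicalEpsilon Classical.
Open Scope R_scope.

Definition fine2 (dl : R -> R) (a b lo hi : R) (n : nat) (x t : nat -> R) : Prop :=
  x 0%nat = a /\ x n = b /\
  (forall i, (i < n)%nat ->
     x i <= x (Datatypes.S i) /\ lo <= t i <= hi /\
     t i - dl (t i) < x i /\ x (Datatypes.S i) < t i + dl (t i)).

Lemma fine2_mc dl a b n x t : fine2 dl a b a b n x t -> mcshane_fine dl a b n x t.
Proof. unfold fine2, mcshane_fine; auto. Qed.

Lemma mc_fine2 dl a b n x t : mcshane_fine dl a b n x t -> fine2 dl a b a b n x t.
Proof. unfold fine2, mcshane_fine; auto. Qed.

Lemma fine2_weak dl dl' a b lo hi lo' hi' n x t :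
  fine2 dl a b lo hi n x t -> (forall s, lo <= s <= hi -> dl s <= dl' s) ->
  lo' <= lo -> hi <= hi' -> fine2 dl' a b lo' hi' n x t.
Proof.
  intros [H0 [H1 H2]] Hd Hl Hh. split; [|split]; auto.
  intros i Hi. destruct (H2 i Hi) as [A [B [C D]]].
  specialize (Hd (t i) B). repeat split; lra.
Qed.

Definition catx (n : nat) (x y : nat -> R) (i : nat) : R :=
  if (i <=? n)%nat then x i else y (i - n)%nat.
Definition catt (n : nat) (t s : nat -> R) (i : nat) : R :=
  if (i <? n)%nat then t i else s (i - n)%nat.

Lemma catx_lt n x y i : (i <= n)%nat -> catx n x y i = x i.
Proof. intros H. unfold catx. destruct (Nat.leb_spec i n); [reflexivity|lia]. Qed.

Lemma catx_ge n x y i : x n = y 0%nat -> (n <= i)%nat -> catx n x y i = y (i - n)%nat.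
Proof.
  intros E H. unfold catx. destruct (Nat.leb_spec i n).
  - assert (i = n) by lia. subst. rewrite Nat.sub_diag. exact E.
  - reflexivity.
Qed.

Lemma catt_lt n t s i : (i < n)%nat -> catt n t s i = t i.
Proof. intros H. unfold catt. destruct (Nat.ltb_spec i n); [reflexivity|lia]. Qed.

Lemma catt_ge n t s i : (n <= i)%nat -> catt n t s i = s (i - n)%nat.
Proof. intros H. unfold catt. destruct (Nat.ltb_spec i n); [lia|reflexivity]. Qed.

Lemma fine2_cat dl a b c lo hi n m x t y s :
  fine2 dl a b lo hi n x t -> fine2 dl b c lo hi m y s ->
  fine2 dl a c lo hi (n + m) (catx n x y) (catt n t s).
Proof.
  intros [X0 [Xn HX]] [Y0 [Ym HY]].
  assert (E : x n = y 0%nat) by congruence.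
  split; [|split].
  - rewrite catx_lt by lia. exact X0.
  - rewrite catx_ge by (auto; lia). replace (n + m - n)%nat with m by lia. exact Ym.
  - intros i Hi. destruct (Nat.lt_ge_cases i n) as [Hlt|Hge].
    + rewrite !catx_lt by lia. rewrite catt_lt by lia. apply HX; lia.
    + rewrite !catx_ge by (auto; lia). rewrite catt_ge by lia.
      replace (Datatypes.S i - n)%nat with (Datatypes.S (i - n)) by lia.
      apply HY; lia.
Qed.

Lemma riemann_ext f x t x' t' n :
  (forall i, (i <= n)%nat -> x i = x' i) -> (forall i, (i < n)%nat -> t i = t' i) ->
  riemann_sum f x t n = riemann_sum f x' t' n.
Proof.
  induction n; intros Hx Ht; simpl; auto.
  rewrite IHn by (intros; auto). rewrite Hx, (Hx n), Ht by lia. reflexivity.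
Qed.

Lemma riemann_cat f n m x t y s :
  x n = y 0%nat ->
  riemann_sum f (catx n x y) (catt n t s) (n + m) =
  riemann_sum f x t n + riemann_sum f y s m.
Proof.
  intros E. induction m.
  - rewrite Nat.add_0_r. simpl. rewrite Rplus_0_r.
    apply riemann_ext; intros. apply catx_lt; lia. apply catt_lt; lia.
  - replace (n + Datatypes.S m)%nat with (Datatypes.S (n + m)) by lia.
    simpl. rewrite IHm.
    rewrite catt_ge by lia. rewrite !catx_ge by (auto; lia).
    replace (n + m - n)%nat with m by lia.
    replace (Datatypes.S (n + m) - n)%nat with (Datatypes.S m) by lia. ring.
Qed.

Definition sx (p q : R) (i : nat) : R := if (i =? 0)%nat then p else q.

Lemma fine2_single dl p q c lo hi :
  p <= q -> lo <= c <= hi -> c - dl c < p -> q < c + dl c ->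
  fine2 dl p q lo hi 1 (sx p q) (fun _ => c).
Proof.
  intros. split; [|split]; try reflexivity.
  intros i Hi. assert (i = 0%nat) by lia. subst. simpl. unfold sx; simpl. lra.
Qed.

Lemma riemann_single f p q c : riemann_sum f (sx p q) (fun _ => c) 1 = f c * (q - p).
Proof. simpl. unfold sx. simpl. ring. Qed.

Lemma riemann_nonneg f x t n :
  (forall i, (i < n)%nat -> 0 <= f (t i) /\ x i <= x (Datatypes.S i)) ->
  0 <= riemann_sum f x t n.
Proof.
  induction n; intros H; simpl. lra.
  assert (0 <= riemann_sum f x t n) by (apply IHn; intros; apply H; lia).
  destruct (H n ltac:(lia)). nra.
Qed.

Lemma cousin dl : (forall s, dl s > 0) -> forall a b, a <= b ->
  exists n x t, fine2 dl a b a b n x t.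
Proof.
  intros Hdl a b Hab.
  set (E := fun s => a <= s <= b /\ exists n x t, fine2 dl a s a s n x t).
  assert (Ea : E a).
  { split. lra. exists 0%nat, (fun _ => a), (fun _ => a).
    split; [|split]; try reflexivity. intros; lia. }
  assert (Hb : bound E) by (exists b; intros s [Hs _]; lra).
  destruct (completeness E Hb (ex_intro _ a Ea)) as [sg [Hub Hlub]].
  assert (Hsa : a <= sg) by (apply Hub; exact Ea).
  assert (Hsb : sg <= b) by (apply Hlub; intros s [Hs _]; lra).
  assert (Hex : exists s, E s /\ s > sg - dl sg).
  { destruct (classic (exists s, E s /\ s > sg - dl sg)) as [H|H]; auto.
    exfalso. assert (sg <= sg - dl sg).
    { apply Hlub. intros s Es. destruct (Rle_dec s (sg - dl sg)); auto.
      exfalso. apply H. exists s. split; auto. lra. }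
    specialize (Hdl sg). lra. }
  destruct Hex as [s [[Hs1 [n [x [t Hf]]]] Hs2]].
  assert (Hss : s <= sg) by (apply Hub; split; auto; exists n, x, t; auto).
  set (sg' := Rmin b (sg + dl sg / 2)).
  assert (H1 : sg' <= b) by apply Rmin_l.
  assert (H2 : sg' <= sg + dl sg / 2) by apply Rmin_r.
  assert (H3 : sg <= sg') by (apply Rmin_glb; specialize (Hdl sg); lra).
  assert (Esg' : E sg').
  { split. lra. exists (n + 1)%nat, (catx n x (sx s sg')), (catt n t (fun _ => sg)).
    apply fine2_cat with (b := s).
    - apply fine2_weak with dl a s; auto; intros; lra.
    - apply fine2_single; specialize (Hdl sg); lra. }
  assert (sg' <= sg) by (apply Hub; auto).
  assert (Hbs : b <= sg).
  { destruct (Rle_dec b sg); auto. exfalso.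
    assert (sg < sg'). { apply Rmin_glb_lt. lra. specialize (Hdl sg). lra. } lra. }
  assert (Heqb : sg' = b) by lra.
  destruct Esg' as [_ Hfin]. rewrite Heqb in Hfin. exact Hfin.
Qed.

Lemma F_spec phi (Hloc : forall a, 0 <= a -> integrable_on phi 0 a) p :
  0 <= p -> has_integral phi 0 p (integral phi 0 p).
Proof.
  intros Hp. destruct (Hloc p Hp) as [I HI]. unfold integral.
  apply epsilon_spec. exists I. exact HI.
Qed.

Lemma nonneg_sum phi (Hnn : forall t, 0 <= t -> 0 <= phi t) dl a b lo hi n x t :
  0 <= lo -> fine2 dl a b lo hi n x t -> 0 <= riemann_sum phi x t n.
Proof.
  intros Hlo [_ [_ H]]. apply riemann_nonneg. intros i Hi.
  destruct (H i Hi) as [A [B _]]. split; auto. apply Hnn. lra.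
Qed.

Lemma F_nonneg phi (Hnn : forall t, 0 <= t -> 0 <= phi t)
  (Hloc : forall a, 0 <= a -> integrable_on phi 0 a) p :
  0 <= p -> 0 <= integral phi 0 p.
Proof.
  intros Hp. apply Rnot_lt_le. intros Hneg.
  destruct (F_spec phi Hloc p Hp (- integral phi 0 p) ltac:(lra)) as [dl [Hdl Hs]].
  destruct (cousin dl Hdl 0 p Hp) as [n [x [t Hf]]].
  specialize (Hs n x t (fine2_mc _ _ _ _ _ _ Hf)).
  pose proof (nonneg_sum phi Hnn _ _ _ _ _ _ _ _ (Rle_refl 0) Hf).
  apply Rabs_def2 in Hs. lra.
Qed.

Lemma F_mono phi (Hnn : forall t, 0 <= t -> 0 <= phi t)
  (Hloc : forall a, 0 <= a -> integrable_on phi 0 a) p q :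
  0 <= p <= q -> integral phi 0 p <= integral phi 0 q.
Proof.
  intros [Hp0 Hpq]. apply Rnot_lt_le. intros Hlt.
  set (e := (integral phi 0 p - integral phi 0 q) / 4).
  destruct (F_spec phi Hloc p ltac:(lra) e ltac:(unfold e; lra)) as [dp [Hdp Hsp]].
  destruct (F_spec phi Hloc q ltac:(lra) e ltac:(unfold e; lra)) as [dq [Hdq Hsq]].
  set (dl := fun s => Rmin (dp s) (dq s)).
  assert (Hdl : forall s, dl s > 0) by (intros s0; unfold dl; apply Rmin_glb_lt; [apply Hdp|apply Hdq]).
  destruct (cousin dl Hdl 0 p ltac:(lra)) as [n [x [t Hf]]].
  destruct (cousin dq Hdq p q ltac:(lra)) as [m [y [s Hg]]].
  assert (F1 := Hsp n x t (fine2_mc _ _ _ _ _ _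
     (fine2_weak _ _ _ _ _ _ _ _ _ _ _ Hf ltac:(intros; apply Rmin_l) (Rle_refl _) (Rle_refl _)))).
  assert (Hf' : fine2 dq 0 p 0 q n x t)
    by (apply (fine2_weak _ _ _ _ _ _ _ _ _ _ _ Hf); [intros; apply Rmin_r|lra|lra]).
  assert (Hg' : fine2 dq p q 0 q m y s)
    by (apply (fine2_weak _ _ _ _ _ _ _ _ _ _ _ Hg); [intros; lra|lra|lra]).
  pose proof (fine2_cat _ _ _ _ _ _ _ _ _ _ _ _ Hf' Hg') as Hc.
  assert (F2 := Hsq _ _ _ (fine2_mc _ _ _ _ _ _ Hc)).
  rewrite riemann_cat in F2 by (destruct Hf as [_ [A _]]; destruct Hg as [B _]; congruence).
  pose proof (nonneg_sum phi Hnn dq p q p q m y s Hp0 Hg).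
  apply Rabs_def2 in F1. apply Rabs_def2 in F2. unfold e in *. lra.
Qed.

Lemma F_cont phi (Hnn : forall t, 0 <= t -> 0 <= phi t)
  (Hloc : forall a, 0 <= a -> integrable_on phi 0 a) c eps :
  0 <= c -> eps > 0 -> exists h, h > 0 /\ forall p q, 0 <= p <= c -> c <= q -> q - p < h ->
    integral phi 0 q - integral phi 0 p < eps.
Proof.
  intros Hc He.
  set (e := eps / 8). set (b := c + 1).
  destruct (F_spec phi Hloc b ltac:(unfold b; lra) e ltac:(unfold e; lra)) as [db [Hdb Hsb]].
  set (A := Rabs (phi c)).
  assert (HA : 0 <= A) by apply Rabs_pos.
  set (h := Rmin (Rmin (db c) 1) (e / (A + 1))).
  assert (Hh1 : h <= db c) by (unfold h; eapply Rle_trans; [apply Rmin_l|apply Rmin_l]).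
  assert (Hh2 : h <= 1) by (unfold h; eapply Rle_trans; [apply Rmin_l|apply Rmin_r]).
  assert (Hh3 : h <= e / (A + 1)) by (unfold h; apply Rmin_r).
  assert (Hh0 : h > 0).
  { unfold h. apply Rmin_glb_lt. apply Rmin_glb_lt; [apply Hdb|lra].
    apply Rdiv_lt_0_compat; unfold e; lra. }
  exists h. split; auto.
  intros p q [Hp0 Hp] Hq Hpq.
  assert (Hqb : q <= b) by (unfold b; lra).
  destruct (F_spec phi Hloc p ltac:(lra) e ltac:(unfold e; lra)) as [dp [Hdp Hsp]].
  destruct (F_spec phi Hloc q ltac:(lra) e ltac:(unfold e; lra)) as [dq [Hdq Hsq]].
  set (d1 := fun s => Rmin (db s) (dp s)).
  set (d2 := fun s => Rmin (db s) (dq s)).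
  assert (Hd1 : forall s, d1 s > 0) by (intros s0; unfold d1; apply Rmin_glb_lt; [apply Hdb|apply Hdp]).
  assert (Hd2 : forall s, d2 s > 0) by (intros s0; unfold d2; apply Rmin_glb_lt; [apply Hdb|apply Hdq]).
  destruct (cousin d1 Hd1 0 p ltac:(lra)) as [n1 [x1 [t1 Hf1]]].
  destruct (cousin d2 Hd2 0 q ltac:(lra)) as [n2 [x2 [t2 Hf2]]].
  destruct (cousin db Hdb q b ltac:(lra)) as [n3 [x3 [t3 Hf3]]].
  assert (G1 := Hsp n1 x1 t1 (fine2_mc _ _ _ _ _ _
     (fine2_weak _ _ _ _ _ _ _ _ _ _ _ Hf1 ltac:(intros; apply Rmin_r) (Rle_refl _) (Rle_refl _)))).
  assert (G2 := Hsq n2 x2 t2 (fine2_mc _ _ _ _ _ _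
     (fine2_weak _ _ _ _ _ _ _ _ _ _ _ Hf2 ltac:(intros; apply Rmin_r) (Rle_refl _) (Rle_refl _)))).
  assert (Hf1' : fine2 db 0 p 0 b n1 x1 t1)
    by (apply (fine2_weak _ _ _ _ _ _ _ _ _ _ _ Hf1); [intros; apply Rmin_l|lra|lra]).
  assert (Hf2' : fine2 db 0 q 0 b n2 x2 t2)
    by (apply (fine2_weak _ _ _ _ _ _ _ _ _ _ _ Hf2); [intros; apply Rmin_l|lra|lra]).
  assert (Hf3' : fine2 db q b 0 b n3 x3 t3)
    by (apply (fine2_weak _ _ _ _ _ _ _ _ _ _ _ Hf3); [intros; lra|lra|lra]).
  assert (Hsg : fine2 db p q 0 b 1 (sx p q) (fun _ => c))
    by (apply fine2_single; lra).
  assert (E1 := fine2_cat _ _ _ _ _ _ _ _ _ _ _ _ Hf2' Hf3').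
  assert (E2 := fine2_cat _ _ _ _ _ _ _ _ _ _ _ _
                  (fine2_cat _ _ _ _ _ _ _ _ _ _ _ _ Hf1' Hsg) Hf3').
  assert (K1 := Hsb _ _ _ (fine2_mc _ _ _ _ _ _ E1)).
  assert (K2 := Hsb _ _ _ (fine2_mc _ _ _ _ _ _ E2)).
  destruct Hf1 as [_ [Z1 _]]. destruct Hf2 as [_ [Z2 _]]. destruct Hf3 as [Z3 _].
  rewrite riemann_cat in K1 by congruence.
  rewrite riemann_cat in K2.
  2:{ rewrite catx_ge by (simpl; unfold sx; simpl; congruence || lia).
      replace (n1 + 1 - n1)%nat with 1%nat by lia. unfold sx; simpl; congruence. }
  rewrite riemann_cat in K2 by (unfold sx; simpl; congruence).
  rewrite riemann_single in K2.
  apply Rabs_def2 in K1. apply Rabs_def2 in K2.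
  apply Rabs_def2 in G1. apply Rabs_def2 in G2.
  assert (HB : phi c * (q - p) <= e).
  { assert (phi c * (q - p) <= A * (q - p)).
    { apply Rmult_le_compat_r. lra. apply Rle_abs. }
    assert (A * (q - p) <= A * h) by (apply Rmult_le_compat_l; lra).
    assert (A * h <= e).
    { assert (h * (A + 1) <= e).
      { assert (h * (A + 1) <= e / (A + 1) * (A + 1)) by (apply Rmult_le_compat_r; lra).
        assert (e / (A + 1) * (A + 1) = e) by (field; lra). lra. }
      nra. }
    lra. }
  unfold e in *. lra.
Qed.

Lemma mprime_le {X : Type} (d : X -> X -> R) Sm T (x y : X) r :
  d (T x) (T y) <= r -> d (T x) (T (Sm x)) <= r -> d (T y) (T (Sm y)) <= r ->
  (d (T x) (T (Sm y)) + d (T y) (T (Sm x))) / 2 <= r -> mprime d Sm T x y <= r.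
Proof. intros; unfold mprime; repeat apply Rmax_lub; auto. Qed.

Lemma mprime_lt {X : Type} (d : X -> X -> R) Sm T (x y : X) r :
  d (T x) (T y) < r -> d (T x) (T (Sm x)) < r -> d (T y) (T (Sm y)) < r ->
  (d (T x) (T (Sm y)) + d (T y) (T (Sm x))) / 2 < r -> mprime d Sm T x y < r.
Proof. intros; unfold mprime; repeat apply Rmax_lub_lt; auto. Qed.

Lemma mprime_ge {X : Type} (d : X -> X -> R) Sm T (x y : X) :
  d (T x) (T (Sm x)) <= mprime d Sm T x y.
Proof. unfold mprime. eapply Rle_trans; [|apply Rmax_l]. apply Rmax_r. Qed.

Lemma conv_unique {X : Type} (d : X -> X -> R) (Hd : is_metric d) u l1 l2 :
  converges_to d u l1 -> converges_to d u l2 -> l1 = l2.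
Proof.
  destruct Hd as [dnn [deq [dsym dtri]]]. intros H1 H2.
  apply deq. destruct (Rle_lt_dec (d l1 l2) 0) as [Hle|Hlt].
  - specialize (dnn l1 l2). lra.
  - exfalso. set (e := d l1 l2 / 2).
    destruct (H1 e ltac:(unfold e; lra)) as [N1 HN1].
    destruct (H2 e ltac:(unfold e; lra)) as [N2 HN2].
    specialize (HN1 (N1 + N2)%nat ltac:(lia)). specialize (HN2 (N1 + N2)%nat ltac:(lia)).
    pose proof (dtri l1 (u (N1 + N2)%nat) l2). rewrite dsym in HN1. unfold e in *. lra.
Qed.

Lemma conv_sub {X : Type} (d : X -> X -> R) u l (sg : nat -> nat) :
  (forall n, (sg n < sg (S n))%nat) -> converges_to d u l -> converges_to d (fun n => u (sg n)) l.
Proof.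
  intros Hs H e He. destruct (H e He) as [N HN]. exists N. intros n Hn. apply HN.
  assert (forall m, (m <= sg m)%nat).
  { induction m. lia. specialize (Hs m). lia. }
  specialize (H0 n). lia.
Qed.

Lemma conv_cont {X : Type} (d : X -> X -> R) (Hd : is_metric d) T u l :
  continuous_map d T -> converges_to d u l -> converges_to d (fun n => T (u n)) (T l).
Proof.
  destruct Hd as [dnn [deq [dsym dtri]]].
  intros HT H e He. destruct (HT l e He) as [dl [Hdl Hy]].
  destruct (H dl Hdl) as [N HN]. exists N. intros n Hn.
  rewrite dsym. apply Hy. rewrite dsym. apply HN; auto.
Qed.

Lemma iterS {X : Type} (f : X -> X) x n : Nat.iter (S n) f x = f (Nat.iter n f x).
Proof. reflexivity. Qed.

Lemma abstract_main (X : Type) (HX : inhabited X) (d : X -> X -> R) (Hd : is_metric d)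
  (Hcomp : complete d) (k : R) (Hk : 0 <= k < 1) (Sm T : X -> X)
  (HTc : continuous_map d T) (HTi : one_to_one T) (HTs : subsequentially_convergent d T)
  (F : R -> R)
  (Fmono : forall p q, 0 <= p <= q -> F p <= F q)
  (Fnn : forall p, 0 <= p -> 0 <= F p)
  (Fpos : forall e, e > 0 -> F e > 0)
  (Fcont : forall c eps, 0 <= c -> eps > 0 -> exists h, h > 0 /\
     forall p q, 0 <= p <= c -> c <= q -> q - p < h -> F q - F p < eps)
  (Hcontr : forall x y, F (d (T (Sm x)) (T (Sm y))) <= k * F (mprime d Sm T x y)) :
  exists b : X,
    (Sm b = b /\ forall c : X, Sm c = c -> c = b) /\
    (sequentially_convergent d T ->
       forall x : X, converges_to d (fun n => Nat.iter n Sm x) b).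
Proof.
  pose proof Hd as Hd'. destruct Hd' as [dnn [deq [dsym dtri]]].
  assert (d0 : forall x, d x x = 0) by (intros; apply deq; reflexivity).
  assert (L0 : forall u v, 0 <= v <= u -> F u <= k * F v -> u = 0).
  { intros u v [Hv Hvu] H. destruct (Rle_lt_dec u 0) as [Hu|Hu]. specialize (dnn). lra.
    exfalso. pose proof (Fpos u Hu). pose proof (Fmono v u (conj Hv Hvu)).
    pose proof (Fnn v Hv). nra. }
  assert (Mge : forall x y, 0 <= mprime d Sm T x y).
  { intros. eapply Rle_trans; [apply dnn|apply mprime_ge]. }
  assert (MK : forall e0, e0 > 0 -> exists e g, 0 < e <= e0 /\ 0 < g <= e0 /\
     (forall u v, 0 <= u -> 0 <= v -> F u <= k * F v -> v < e + g -> u < e)).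
  { intros e0 He0. pose proof (Fpos e0 He0) as HF0.
    destruct (Fcont e0 ((1 - k) * F e0 / 2) ltac:(lra) ltac:(nra)) as [h [Hh Hc]].
    set (g := Rmin (h / 2) e0).
    assert (Hg1 : g <= h / 2) by apply Rmin_l.
    assert (Hg2 : g <= e0) by apply Rmin_r.
    assert (Hg0 : 0 < g) by (apply Rmin_glb_lt; lra).
    exists e0, g. split; [lra|split;[lra|]].
    intros u v Hu Hv Huv Hve. apply Rnot_le_lt. intro Hge.
    pose proof (Hc e0 (e0 + g) ltac:(lra) ltac:(lra) ltac:(lra)) as Hw.
    pose proof (Fmono e0 u ltac:(lra)).
    pose proof (Fmono v (e0 + g) ltac:(lra)).
    pose proof (Fmono e0 (e0 + g) ltac:(lra)).
    set (w := F (e0 + g) - F e0) in *.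
    assert (k * F v <= k * F (e0 + g)) by (apply Rmult_le_compat_l; lra).
    assert (Hw0 : 0 <= w) by (unfold w; lra).
    assert (k * w <= w) by nra.
    assert (k * F (e0 + g) = k * F e0 + k * w) by (unfold w; ring).
    nra. }
  assert (Ato0 : forall x0 e, e > 0 -> exists N, forall n, (n >= N)%nat ->
            d (T (Nat.iter n Sm x0)) (T (Nat.iter (S n) Sm x0)) < e).
  { intros x0.
    set (a := fun n => d (T (Nat.iter n Sm x0)) (T (Nat.iter (S n) Sm x0))).
    assert (Step : forall n, a (S n) <= a n /\ F (a (S n)) <= k * F (a n)).
    { intros n. pose proof (Hcontr (Nat.iter n Sm x0) (Nat.iter (S n) Sm x0)) as H.
      change (F (a (S n)) <= k * F (mprime d Sm T (Nat.iter n Sm x0) (Nat.iter (S n) Sm x0))) in H.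
      assert (Ha0 : 0 <= a n) by apply dnn.
      assert (Ha1 : 0 <= a (S n)) by apply dnn.
      assert (Hm : mprime d Sm T (Nat.iter n Sm x0) (Nat.iter (S n) Sm x0) <= Rmax (a n) (a (S n))).
      { pose proof (Rmax_l (a n) (a (S n))). pose proof (Rmax_r (a n) (a (S n))).
        apply mprime_le.
        - change (a n <= Rmax (a n) (a (S n))). lra.
        - change (a n <= Rmax (a n) (a (S n))). lra.
        - change (a (S n) <= Rmax (a n) (a (S n))). lra.
        - change ((d (T (Nat.iter n Sm x0)) (T (Nat.iter (S (S n)) Sm x0)) +
                   d (T (Nat.iter (S n) Sm x0)) (T (Nat.iter (S n) Sm x0))) / 2 <= Rmax (a n) (a (S n))).
          rewrite d0.
          pose proof (dtri (T (Nat.iter n Sm x0)) (T (Nat.iter (S n) Sm x0)) (T (Nat.iter (S (S n)) Sm x0))).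
          change (d (T (Nat.iter n Sm x0)) (T (Nat.iter (S (S n)) Sm x0)) <= a n + a (S n)) in H2.
          lra. }
      pose proof (Mge (Nat.iter n Sm x0) (Nat.iter (S n) Sm x0)) as HM0.
      destruct (Rle_dec (a (S n)) (a n)) as [Hle|Hgt].
      - split; auto. rewrite Rmax_left in Hm by lra.
        pose proof (Fmono _ _ (conj HM0 Hm)).
        assert (k * F (mprime d Sm T (Nat.iter n Sm x0) (Nat.iter (S n) Sm x0)) <= k * F (a n))
          by (apply Rmult_le_compat_l; lra). lra.
      - exfalso. rewrite Rmax_right in Hm by lra.
        pose proof (L0 _ _ (conj HM0 Hm) H). lra. }
    assert (Fa : forall n, F (a n) <= k ^ n * F (a 0%nat)).
    { induction n. simpl. lra. destruct (Step n) as [_ H].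
      simpl. pose proof (pow_le k n (proj1 Hk)).
      assert (k * F (a n) <= k * (k ^ n * F (a 0%nat))) by (apply Rmult_le_compat_l; lra).
      lra. }
    intros e He. pose proof (Fpos e He) as HFe. pose proof (Fnn (a 0%nat) (dnn _ _)) as HFa.
    destruct (pow_lt_1_zero k ltac:(rewrite Rabs_right; lra) (F e / (F (a 0%nat) + 1))
               ltac:(apply Rdiv_lt_0_compat; lra)) as [N HN].
    exists N. intros n Hn. apply Rnot_le_lt. intros Hge.
    specialize (HN n Hn). rewrite Rabs_right in HN by (apply Rle_ge, pow_le; lra).
    pose proof (pow_le k n (proj1 Hk)).
    assert (k ^ n * (F (a 0%nat) + 1) < F e / (F (a 0%nat) + 1) * (F (a 0%nat) + 1))
      by (apply Rmult_lt_compat_r; lra).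
    assert (F e / (F (a 0%nat) + 1) * (F (a 0%nat) + 1) = F e) by (field; lra).
    change (d (T (Nat.iter n Sm x0)) (T (Nat.iter (S n) Sm x0))) with (a n) in *.
    pose proof (Fmono e (a n) ltac:(lra)). specialize (Fa n).
    nra. }
  assert (Cau : forall x0, cauchy d (fun n => T (Nat.iter n Sm x0))).
  { intros x0 e0 He0.
    destruct (MK (e0 / 3) ltac:(lra)) as [e [g [He [Hg Hkey]]]].
    destruct (Ato0 x0 (g / 4) ltac:(lra)) as [N HN].
    assert (Cl : forall p, d (T (Nat.iter N Sm x0)) (T (Nat.iter (N + p) Sm x0)) < e + g / 2).
    { induction p.
      - rewrite Nat.add_0_r, d0. lra.
      - replace (N + S p)%nat with (S (N + p)) by lia.
        pose proof (HN N ltac:(lia)) as HaN. pose proof (HN (N + p)%nat ltac:(lia)) as HaNp.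
        pose proof (Hcontr (Nat.iter N Sm x0) (Nat.iter (N + p) Sm x0)) as H.
        change (F (d (T (Nat.iter (S N) Sm x0)) (T (Nat.iter (S (N + p)) Sm x0))) <=
                k * F (mprime d Sm T (Nat.iter N Sm x0) (Nat.iter (N + p) Sm x0))) in H.
        assert (Hm : mprime d Sm T (Nat.iter N Sm x0) (Nat.iter (N + p) Sm x0) < e + g).
        { apply mprime_lt.
          - lra.
          - change (d (T (Nat.iter N Sm x0)) (T (Nat.iter (S N) Sm x0)) < e + g). lra.
          - change (d (T (Nat.iter (N + p) Sm x0)) (T (Nat.iter (S (N + p)) Sm x0)) < e + g). lra.
          - change ((d (T (Nat.iter N Sm x0)) (T (Nat.iter (S (N + p)) Sm x0)) +
                     d (T (Nat.iter (N + p) Sm x0)) (T (Nat.iter (S N) Sm x0))) / 2 < e + g).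
            pose proof (dtri (T (Nat.iter N Sm x0)) (T (Nat.iter (N + p) Sm x0)) (T (Nat.iter (S (N + p)) Sm x0))).
            pose proof (dtri (T (Nat.iter (N + p) Sm x0)) (T (Nat.iter N Sm x0)) (T (Nat.iter (S N) Sm x0))).
            rewrite (dsym (T (Nat.iter (N + p) Sm x0)) (T (Nat.iter N Sm x0))) in H1.
            lra. }
        pose proof (Hkey _ _ (dnn _ _) (Mge _ _) H Hm).
        pose proof (dtri (T (Nat.iter N Sm x0)) (T (Nat.iter (S N) Sm x0)) (T (Nat.iter (S (N + p)) Sm x0))).
        lra. }
    exists N. intros m n Hm Hn.
    pose proof (Cl (m - N)%nat) as C1. pose proof (Cl (n - N)%nat) as C2.
    replace (N + (m - N))%nat with m in C1 by lia.
    replace (N + (n - N))%nat with n in C2 by lia.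
    pose proof (dtri (T (Nat.iter m Sm x0)) (T (Nat.iter N Sm x0)) (T (Nat.iter n Sm x0))).
    rewrite dsym in C1. lra. }
  assert (Fix : forall x0 b, converges_to d (fun n => T (Nat.iter n Sm x0)) (T b) -> Sm b = b).
  { intros x0 b Hconv. apply HTi. apply deq.
    set (c := d (T (Sm b)) (T b)).
    destruct (Rle_lt_dec c 0) as [Hc0|Hc0]. pose proof (dnn (T (Sm b)) (T b)). unfold c in *. lra.
    exfalso. pose proof (Fpos c Hc0) as HFc.
    set (eps := (1 - k) * F c / 2).
    destruct (Fcont c eps ltac:(lra) ltac:(unfold eps; nra)) as [h [Hh Hcont]].
    set (h' := Rmin (h / 2) c).
    assert (Hh1 : h' <= h / 2) by apply Rmin_l.
    assert (Hh2 : h' <= c) by apply Rmin_r.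
    assert (Hh0 : 0 < h') by (apply Rmin_glb_lt; lra).
    destruct (Hconv (h' / 2) ltac:(lra)) as [N1 HN1].
    destruct (Ato0 x0 (h' / 2) ltac:(lra)) as [N2 HN2].
    set (n := (N1 + N2)%nat).
    pose proof (HN1 n ltac:(unfold n; lia)) as B1.
    pose proof (HN1 (S n) ltac:(unfold n; lia)) as B2.
    pose proof (HN2 n ltac:(unfold n; lia)) as B3.
    simpl in B1, B2.
    set (xn := Nat.iter n Sm x0) in *.
    change (Nat.iter (S n) Sm x0) with (Sm xn) in *.
    pose proof (Hcontr b xn) as H.
    set (u := d (T (Sm b)) (T (Sm xn))) in *.
    set (M := mprime d Sm T b xn) in *.
    set (p := c - h' / 2). set (q := c + h' / 2).
    assert (Hp0 : 0 <= p) by (unfold p; lra).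
    assert (Hpc : p <= c) by (unfold p; lra).
    assert (Hcq : c <= q) by (unfold q; lra).
    assert (Hqp : q - p < h) by (unfold p, q; lra).
    assert (Hu : p <= u).
    { pose proof (dtri (T (Sm b)) (T (Sm xn)) (T b)). unfold p, u, c in *. lra. }
    assert (HM : M < q).
    { unfold M. apply mprime_lt.
      - rewrite dsym. unfold q. lra.
      - rewrite dsym. fold c. unfold q. lra.
      - unfold q. lra.
      - pose proof (dtri (T xn) (T b) (T (Sm b))).
        rewrite (dsym (T b) (T (Sm xn))). fold c. rewrite (dsym (T b) (T (Sm b))) in H0. fold c in H0.
        unfold q. lra. }
    assert (HM0 : 0 <= M) by apply Mge.
    pose proof (Hcont p q ltac:(lra) ltac:(lra) ltac:(lra)) as Hpq.
    pose proof (Fmono p u ltac:(lra)).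
    pose proof (Fmono M q ltac:(lra)).
    pose proof (Fmono p c ltac:(lra)).
    pose proof (Fmono c q ltac:(lra)).
    pose proof (Fnn p ltac:(lra)).
    assert (k * F M <= k * F q) by (apply Rmult_le_compat_l; lra).
    set (w := F q - F p) in *.
    assert (Hw0 : 0 <= w) by (unfold w; lra).
    assert (k * w <= w) by nra.
    assert (k * F q = k * F p + k * w) by (unfold w; ring).
    assert (A1 : (1 - k) * F p <= w) by lra.
    assert (A2 : F c - w <= F p) by (unfold w; lra).
    assert (A3 : (1 - k) * (F c - w) <= (1 - k) * F p) by (apply Rmult_le_compat_l; lra).
    assert (A4 : w < (1 - k) * F c / 2) by (unfold eps in Hpq; lra).
    assert (A5 : 0 <= k * ((1 - k) * F c)) by (apply Rmult_le_pos; [lra|]; apply Rmult_le_pos; lra).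
    assert (A6 : k * w <= k * ((1 - k) * F c / 2)) by (apply Rmult_le_compat_l; lra).
    assert (A7 : 0 < (1 - k) * F c) by (apply Rmult_lt_0_compat; lra).
    lra. }
  assert (Uniq : forall b c, Sm b = b -> Sm c = c -> c = b).
  { intros b c Hb Hc. apply HTi.
    pose proof (Hcontr c b) as H.
    assert (Hm : mprime d Sm T c b <= d (T c) (T b)).
    { apply mprime_le; rewrite ?Hb, ?Hc, ?d0; try apply dnn; try lra.
      rewrite (dsym (T b) (T c)). lra. }
    rewrite Hb, Hc in H.
    apply deq. apply (L0 _ _ (conj (Mge c b) Hm) H). }
  destruct HX as [x0].
  destruct (Hcomp _ (Cau x0)) as [z Hz].
  destruct (HTs (fun n => Nat.iter n Sm x0) (ex_intro _ z Hz)) as [sg [Hsg [b Hb]]].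
  pose proof (conv_cont d Hd T _ _ HTc Hb) as Hb1.
  pose proof (conv_sub d _ _ sg Hsg Hz) as Hz1.
  pose proof (conv_unique d Hd _ _ _ Hb1 Hz1) as Hzb. subst z.
  pose proof (Fix x0 b Hz) as Hfix.
  exists b. split. { split; auto. }
  intros Hsc x.
  destruct (Hcomp _ (Cau x)) as [z' Hz'].
  destruct (Hsc (fun n => Nat.iter n Sm x) (ex_intro _ z' Hz')) as [b' Hb'].
  pose proof (Fix x b' (conv_cont d Hd T _ _ HTc Hb')) as Hfix'.
  rewrite <- (Uniq b b' Hfix Hfix'). exact Hb'.
Qed.

Theorem theorem2p1
  (X : Type) (HX : inhabited X) (d : X -> X -> R) (Hd : is_metric d) (Hcomp : complete d)
  (k : R) (Hk : 0 <= k < 1)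
  (S T : X -> X)
  (HTc : continuous_map d T) (HTi : one_to_one T)
  (HTs : subsequentially_convergent d T)
  (phi : R -> R)
  (Hphi_nonneg : forall t, 0 <= t -> 0 <= phi t)
  (Hphi_loc : forall a, 0 <= a -> integrable_on phi 0 a)
  (Hphi_pos : forall eps, eps > 0 -> integral phi 0 eps > 0)
  (Hcontr : forall x y : X,
     integral phi 0 (d (T (S x)) (T (S y))) <= k * integral phi 0 (mprime d S T x y)) :
  exists b : X,
    (S b = b /\ forall c : X, S c = c -> c = b) /\
    (sequentially_convergent d T ->
       forall x : X, converges_to d (fun n => Nat.iter n S x) b).
Proof.
  apply (abstract_main X HX d Hd Hcomp k Hk S T HTc HTi HTs (integral phi 0)).
  - intros p q Hpq. apply F_mono; auto.
  - intros p Hp. apply F_nonneg; auto.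
  - exact Hphi_pos.
  - intros c eps Hc He. apply F_cont; auto.
  - exact Hcontr.
Qed.
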